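(* Let $\Gamma$ be a distance-regular graph with intersection array $\{b_0,b_1,\dots,b_{D-1};c_1,\dots,c_D\}$ and let $(u_{ij})$ be the generators of $C(G_{aut}^+(\Gamma))$. Let $2\le m\le D$ with $c_m\ge 2$, and assume $u_{ij}u_{kl}=u_{kl}u_{ij}$ for all vertices $i,j,k,l$ with $d(i,k)=d(j,l)=m-1$. If one of the following holds: (a) $c_2=1$ and $b_1+1=b_0$; (b) $c_2=1$ and $b_1+2=b_0$; (c) $c_2=2$, $m=2$ and $b_1+3=b_0$; then $u_{ij}u_{kl}=u_{kl}u_{ij}$ for all $i,j,k,l$ with $d(i,k)=d(j,l)=m$.
   Context: A connected regular graph $\Gamma=(V,E)$ of diameter $D$ is distance-regular with intersection array $\{b_0,\dots,b_{D-1};c_1,\dots,c_D\}$ if for any vertices $v,w$ with $d(v,w)=i$, exactly $b_i$ neighbors of $w$ are at distance $i+1$ from $v$ and exactly $c_i$ neighbors of $w$ are at distance $i-1$ from $v$ ($d$ the graph distance). $C(G_{aut}^+(\Gamma))$ is the universal unital $C^*$-algebra generated by $u_{ij}$, $i,j\in V=\{1,\dots,n\}$, with relations: (R1) $u_{ij}=u_{ij}^*=u_{ij}^2$; (R2) $\sum_{l} u_{il}=1=\sum_{l} u_{li}$ for all $i$; (R3) $u_{ij}u_{kl}=u_{kl}u_{ij}=0$ whenever exactly one of $(i,k)\in E$, $(j,l)\in E$ holds. *)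

(* Defs.v *)
From HB Require Import structures.
From mathcomp Require Import all_boot all_order all_algebra.
Set Implicit Arguments. Unset Strict Implicit. Unset Printing Implicit Defensive.
Import Order.TTheory GRing.Theory Num.Theory.

Definition ball (n : nat) (e : rel 'I_n) (k : nat) (x : 'I_n) : {set 'I_n} :=
  iter k (fun S => S :|: [set y | [exists z in S, e z y]]) [set x].

(* Graph distance d(x,y): least k with y in ball k x (searched in 0..n-1; for a
   connected graph on n vertices the distance is always < n). *)
Definition gdist (n : nat) (e : rel 'I_n) (x y : 'I_n) : nat :=
  find (fun k => y \in ball e k x) (iota 0 n).

Definition simple_graph (n : nat) (e : rel 'I_n) : Prop :=
  symmetric e /\ irreflexive e.

Definition connected_graph (n : nat) (e : rel 'I_n) : Prop :=
  forall x y : 'I_n, connect e x y.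

Definition has_diameter (n : nat) (e : rel 'I_n) (D : nat) : Prop :=
  (forall x y : 'I_n, gdist e x y <= D) /\
  (exists x y : 'I_n, gdist e x y = D).

(* Distance-regular with intersection array {b_0..b_{D-1}; c_1..c_D}:
   connected, of diameter D, and for all v,w with d(v,w)=i, exactly b_i
   neighbours of w are at distance i+1 from v (i < D) and exactly c_i
   neighbours of w are at distance i-1 from v (1 <= i <= D).
   (Regularity of degree b_0 is the case i = 0.) *)
Definition distance_regular (n : nat) (e : rel 'I_n) (D : nat)
    (b c : nat -> nat) : Prop :=
  [/\ simple_graph e, connected_graph e, has_diameter e D &
      forall v w : 'I_n,
        (gdist e v w < D ->
           #|[set z | e w z & gdist e v z == (gdist e v w).+1]| = b (gdist e v w)) /\
        (1 <= gdist e v w ->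
           #|[set z | e w z & gdist e v z == (gdist e v w).-1]| = c (gdist e v w))].

Local Open Scope ring_scope.
(* A unital C*-algebra over the scalar field C (C = the complex numbers; we
   allow any numClosedFieldType, of which the complex numbers are the intended
   instance): an algebra A with a conjugate-linear anti-multiplicative
   involution, and a complete submultiplicative norm satisfying the
   C*-identity. *)
Record cstar_algebra (C : numClosedFieldType) (A : algType C)
    (star : A -> A) (nrm : A -> C) : Prop := {
  star_add : forall x y, star (x + y) = star x + star y;
  star_scale : forall (a : C) x, star (a *: x) = Num.conj a *: star x;
  star_mul : forall x y, star (x * y) = star y * star x;
  star_invol : forall x, star (star x) = x;
  nrm_ge0 : forall x, 0 <= nrm x;
  nrm_eq0 : forall x, nrm x = 0 -> x = 0;
  nrm_add : forall x y, nrm (x + y) <= nrm x + nrm y;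
  nrm_scale : forall (a : C) x, nrm (a *: x) = `|a| * nrm x;
  nrm_mul : forall x y, nrm (x * y) <= nrm x * nrm y;
  nrm_cstar : forall x, nrm (star x * x) = nrm x ^+ 2;
  nrm_complete : forall s : nat -> A,
    (forall eps : C, 0 < eps -> exists N, forall p q, (N <= p)%N -> (N <= q)%N ->
        nrm (s p - s q) < eps) ->
    exists x, forall eps : C, 0 < eps -> exists N, forall p, (N <= p)%N ->
        nrm (s p - x) < eps
}.

(* Relations (R1)-(R3) of C(G_aut^+(Gamma)) for a family u of elements of A. *)
Definition qaut_relations (n : nat) (e : rel 'I_n) (C : numClosedFieldType)
    (A : algType C) (star : A -> A) (u : 'I_n -> 'I_n -> A) : Prop :=
  [/\ (forall i j, u i j = star (u i j) /\ u i j = u i j * u i j),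
      (forall i, \sum_(l < n) u i l = 1 /\ \sum_(l < n) u l i = 1) &
      (forall i j k l, (e i k) != (e j l) ->
          u i j * u k l = 0 /\ u k l * u i j = 0)].

(* Main.v *)
Require Import Defs.
From HB Require Import structures.
From mathcomp Require Import all_boot all_order all_algebra zify.
Import Order.TTheory GRing.Theory Num.Theory.
Set Implicit Arguments. Unset Strict Implicit. Unset Printing Implicit Defensive.

Section Graph.
Variables (n : nat) (e : rel 'I_n).
Hypothesis esy : symmetric e.
Hypothesis eirr : irreflexive e.
Hypothesis econn : forall x y, connect e x y.

Lemma ballS k x : ball e k.+1 x = ball e k x :|: [set y | [exists z in ball e k x, e z y]].
Proof. by []. Qed.

Lemma ball0 x : ball e 0 x = [set x]. Proof. by []. Qed.

Lemma ball_sub k x : ball e k x \subset ball e k.+1 x.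
Proof. by rewrite ballS subsetUl. Qed.

Lemma ball_mono j k x : j <= k -> ball e j x \subset ball e k x.
Proof.
move=> /subnK <-; elim: (k - j) => [|i IH]; first by rewrite add0n.
by rewrite addSn (subset_trans IH) // ball_sub.
Qed.

Lemma ball_edge k x y z : y \in ball e k x -> e y z -> z \in ball e k.+1 x.
Proof.
move=> hy hyz; rewrite ballS inE; apply/orP; right; rewrite inE.
by apply/existsP; exists y; rewrite hy hyz.
Qed.

Lemma ballSP k x y : y \in ball e k.+1 x ->
  y \in ball e k x \/ exists2 z, z \in ball e k x & e z y.
Proof.
rewrite ballS inE => /orP[->|]; first by left.
by rewrite inE => /existsP[z /andP[hz hzy]]; right; exists z.
Qed.

Lemma ball_const j x : ball e j x = ball e j.+1 x -> forall i, ball e (j + i) x = ball e j x.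
Proof.
move=> hj; elim=> [|i IH]; first by rewrite addn0.
by rewrite addnS ballS IH -ballS -hj.
Qed.

Lemma ball_grow k x : (exists2 j, j <= k & ball e j x = ball e j.+1 x) \/ k < #|ball e k x|.
Proof.
elim: k => [|k [IH|IH]].
- by right; rewrite ball0 cards1.
- by left; case: IH => j hj hb; exists j => //; exact: leqW.
- case: (boolP (ball e k x == ball e k.+1 x)) => [/eqP h|h].
  + by left; exists k.
  + right; apply: (leq_ltn_trans IH); apply: proper_card.
    by rewrite properEneq h ball_sub.
Qed.

Lemma ball_all k x : ball e k x \subset ball e n.-1 x.
Proof.
have hn : 0 < n by case: x => x' hx; apply: leq_ltn_trans hx.
case: (leqP k n.-1) => hk; first exact: ball_mono.
case: (ball_grow n.-1 x) => [[j hj hb]|hc].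
- have hjk : j <= k by apply: ltnW; apply: leq_ltn_trans hk.
  by rewrite -(subnKC hjk) ball_const // ball_mono.
- have -> : ball e n.-1 x = setT; last exact: subsetT.
  apply/eqP; rewrite eqEcard subsetT cardsT card_ord.
  by rewrite -{1}(prednK hn).
Qed.

Lemma in_ball_some x y : exists k, y \in ball e k x.
Proof.
case/connectP: (econn x y) => p hp ->.
suff H : forall p z k, path e z p -> z \in ball e k x ->
    last z p \in ball e (k + size p) x.
  by exists (size p); rewrite -(add0n (size p)); apply: H => //; rewrite ball0 set11.
elim=> [|y' p' IH] z k /=; first by rewrite addn0.
case/andP=> hzy hp' hz; rewrite addnS -addSn; apply: IH => //.
exact: ball_edge hz hzy.
Qed.

Lemma in_ball_max x y : y \in ball e n.-1 x.
Proof. by case: (in_ball_some x y) => k hk; exact: (subsetP (ball_all k x)). Qed.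

Lemma gdist_has x y : has (fun k => y \in ball e k x) (iota 0 n).
Proof.
have hn : 0 < n by case: x => x' hx; apply: leq_ltn_trans hx.
apply/hasP; exists n.-1; last exact: in_ball_max.
by rewrite mem_iota add0n leq0n /= prednK.
Qed.

Lemma gdist_lt x y : gdist e x y < n.
Proof. by have := gdist_has x y; rewrite has_find size_iota. Qed.

Lemma gdist_ball x y : y \in ball e (gdist e x y) x.
Proof.
have := nth_find 0 (gdist_has x y).
by rewrite nth_iota ?add0n //; exact: gdist_lt.
Qed.

Lemma gdist_min x y k : y \in ball e k x -> gdist e x y <= k.
Proof.
move=> hk; rewrite leqNgt; apply/negP => hlt.
have hkn : k < n := ltn_trans hlt (gdist_lt x y).
by have := before_find 0 hlt; rewrite nth_iota // add0n hk.
Qed.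

Lemma gdistP x y k : (gdist e x y <= k) = (y \in ball e k x).
Proof.
apply/idP/idP => [h|]; last exact: gdist_min.
exact: (subsetP (ball_mono x h)) (gdist_ball x y).
Qed.

Lemma gdist_xx x : gdist e x x = 0.
Proof. by apply/eqP; rewrite -leqn0 gdistP ball0 set11. Qed.

Lemma gdist0 x y : gdist e x y = 0 -> y = x.
Proof. by move=> h; have := gdist_ball x y; rewrite h ball0 inE => /eqP. Qed.

Lemma gdist_edge x y z : e y z -> gdist e x z <= (gdist e x y).+1.
Proof. by move=> hyz; rewrite gdistP; apply: ball_edge hyz; exact: gdist_ball. Qed.

Lemma gdist1 x y : e x y -> gdist e x y = 1.
Proof.
move=> hxy; apply/eqP; rewrite eqn_leq.
have := gdist_edge x hxy; rewrite gdist_xx => ->.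
rewrite lt0n; apply/negP => /eqP /gdist0 hyx.
by move: hxy; rewrite hyx eirr.
Qed.

Lemma gdist1E x y : (gdist e x y == 1) = e x y.
Proof.
apply/idP/idP => [/eqP h|/gdist1 ->//].
have := gdist_ball x y; rewrite h => /ballSP [].
  by rewrite ball0 inE => /eqP hyx; move: h; rewrite hyx gdist_xx.
by move=> [z]; rewrite ball0 inE => /eqP ->.
Qed.

Lemma gdist_pred x y s : gdist e x y = s.+1 -> exists2 z, e z y & gdist e x z = s.
Proof.
move=> h; have := gdist_ball x y; rewrite h => /ballSP [].
  by rewrite -gdistP h ltnn.
move=> [z hz hzy]; exists z => //.
apply/eqP; rewrite eqn_leq gdistP hz /=.
by have := gdist_edge x hzy; rewrite h ltnS.
Qed.


Section DR.
Variables (D : nat) (b c : nat -> nat).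
Hypothesis Hdr : forall v w : 'I_n,
  (gdist e v w < D ->
    #|[set z | e w z & gdist e v z == (gdist e v w).+1]| = b (gdist e v w)) /\
  (1 <= gdist e v w ->
    #|[set z | e w z & gdist e v z == (gdist e v w).-1]| = c (gdist e v w)).
Hypothesis HD : 2 <= D.

Lemma deg a : #|[set x | e a x]| = b 0.
Proof.
have := (Hdr a a).1; rewrite gdist_xx => /(_ (ltnW HD)) <-.
by apply: eq_card => z; rewrite !inE gdist1E andbb.
Qed.

Lemma common2 x y : gdist e x y = 2 -> #|[set z | e x z & e y z]| = c 2.
Proof.
move=> h; have := (Hdr x y).2; rewrite h => /(_ isT) <-.
by apply: eq_card => z; rewrite !inE gdist1E andbC.
Qed.

Lemma gdist_common x y z : e x z -> e y z -> gdist e x y <= 2.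
Proof.
move=> hxz hyz; have hzy : e z y by rewrite esy.
by have := gdist_edge x hzy; rewrite (gdist1 hxz).
Qed.

Lemma Hdeg_lemma : 0 < b 0 -> b 0 != c 2 -> forall a x y, x != y -> ~~ e x y ->
  #|[set z | e a z]| != #|[set z | e x z & e y z]|.
Proof.
move=> hb0 hbc a x y hxy hnxy; rewrite deg.
case: (set_0Vmem [set z | e x z & e y z]) => [->|[z]].
  by rewrite cards0 -lt0n.
rewrite inE => /andP[hxz hyz].
have h2 := gdist_common hxz hyz.
have h0 : gdist e x y != 0 by apply/eqP => /gdist0 h; move: hxy; rewrite h eqxx.
have h1 : gdist e x y != 1 by rewrite gdist1E.
rewrite common2 //; lia.
Qed.

Lemma HK_lemma m :
  [\/ c 2 = 1 /\ b 1 + 1 = b 0, c 2 = 1 /\ b 1 + 2 = b 0 |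
      [/\ c 2 = 2, m = 2 & b 1 + 3 = b 0]] ->
  forall j l, gdist e j l = m -> forall q q' a, e l q -> e l q' -> q != q' ->
  gdist e j q = m.-1 -> gdist e j q' = m.-1 -> e q a -> e q' a -> gdist e j a = m ->
  a = l.
Proof.
move=> Hc j l hjl q q' a hlq hlq' hqq hjq hjq' hqa hq'a hja.
set S := [set z | e q' z & gdist e q z == 1].
have lS : l \in S by rewrite inE esy hlq' gdist1E esy hlq.
have aS : a \in S by rewrite inE hq'a gdist1E hqa.
have hd2 : gdist e q q' <= 2 by apply: (gdist_common (z:=l)); rewrite esy.
have hd0 : gdist e q q' != 0 by apply/eqP => /gdist0 h; move: hqq; rewrite h eqxx.
have key : (#|S| = c 2) \/ (#|S| + b 1 + 1 <= b 0).
  case: (eqVneq (gdist e q q') 1) => hd1; last first.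
    have hd : gdist e q q' = 2 by lia.
    by left; have := (Hdr q q').2; rewrite hd => /(_ isT).
  right.
  set S2 := [set z | e q' z & gdist e q z == 2].
  have hS2 : #|S2| = b 1.
    have := (Hdr q q').1; rewrite hd1 => /(_ HD) <-.
    by [].
  have hsub : S :|: S2 \subset [set z | e q' z] :\ q.
    apply/subsetP => z; rewrite !inE => /orP[] /andP[-> /eqP hz];
      rewrite andbT; apply/eqP => hzq; by move: hz; rewrite hzq gdist_xx.
  have hdis : S :&: S2 = set0.
    apply/setP => z; rewrite !inE.
    by case: (gdist e q z) => [|[|[|?]]]; rewrite ?andbF ?andbT.
  have := subset_leq_card hsub; rewrite cardsU hdis cards0 subn0 hS2.
  have hq : q \in [set z | e q' z] by rewrite inE esy -gdist1E hd1.
  have := cardsD1 q [set z | e q' z]; rewrite hq deg; lia.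
have two : a != l -> 1 < #|S|.
  by move=> hal; apply/card_gt1P; exists a, l.
case: (eqVneq a l) => // hal.
have h2 := two hal.
case: Hc => [[hc hb]|[hc hb]|[hc hm hb]]; try lia.
subst m; rewrite hm /= in hjq hjq' hja.
have jS : j \in S.
  have ejq : e j q by rewrite -gdist1E hjq.
  have ejq' : e j q' by rewrite -gdist1E hjq'.
  by rewrite inE esy ejq' /= gdist1E esy ejq.
have hjl' : j != l by apply/eqP => h; move: hm; rewrite -h gdist_xx.
have hja' : j != a by apply/eqP => h; move: hja; rewrite -h gdist_xx.
have : 1 < #|S :\ a|.
  apply/card_gt1P; exists l, j; rewrite !in_setD1 lS jS !andbT; split => //.
  - by rewrite eq_sym.
  - by rewrite eq_sym.
have := cardsD1 a S; rewrite aS; lia.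
Qed.

End DR.

Local Open Scope ring_scope.

Lemma sum_restrict (R : nmodType) (S : {set 'I_n}) (F : 'I_n -> R) :
  (forall y, y \notin S -> F y = 0) -> \sum_y F y = \sum_(y in S) F y.
Proof.
move=> h; rewrite [RHS]big_mkcond /=; apply: eq_bigr => y _.
by case: ifPn => // /h.
Qed.

Section Orth.
Variables (C : numClosedFieldType) (A : algType C) (v : 'I_n -> 'I_n -> A).
Hypothesis Hrow : forall i, \sum_l v i l = 1.
Hypothesis Hcol : forall i, \sum_l v l i = 1.
Hypothesis H3 : forall i j k l, e i k != e j l -> v i j * v k l = 0 /\ v k l * v i j = 0.
Hypothesis Hdeg : forall a b c, b != c -> ~~ e b c ->
  #|[set x | e a x]| != #|[set y | e b y & e c y]|.

Lemma insert_row x (X Y : A) : X * Y = \sum_y X * v x y * Y.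
Proof.
transitivity (X * (\sum_y v x y) * Y); first by rewrite Hrow mulr1.
by rewrite mulr_sumr mulr_suml.
Qed.

Lemma natmul_0 (X : A) p q : X *+ p = X *+ q -> p != q -> X = 0.
Proof.
move=> h hpq; rewrite -!scaler_nat in h.
have hr : (p%:R - q%:R : C) != 0 by rewrite subr_eq0 eqr_nat.
have : (p%:R - q%:R : C) *: X = 0 by rewrite scalerBl h subrr.
move=> h2; rewrite -[X]scale1r -(mulVf hr) -scalerA h2.
by rewrite scaler0.
Qed.

Lemma orth_row a b c : b != c -> v a b * v a c = 0.
Proof.
move=> hbc; case: (boolP (e b c)) => hec.
  by have := @H3 a b a c; rewrite eirr hec => /(_ isT) [].
set X := v a b * v a c.
apply: (natmul_0 _ (Hdeg a hbc hec)); rewrite -!sumr_const.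
transitivity (\sum_(x in [set x | e a x]) \sum_(y in [set y | e b y & e c y])
    v a b * v x y * v a c).
  apply: eq_bigr => x; rewrite inE => hax.
  rewrite /X (insert_row x) (sum_restrict (S:=[set y | e b y & e c y])) //.
  move=> y; rewrite inE negb_and => /orP[hby|hcy].
    by have := @H3 a b x y; rewrite hax (negbTE hby) => /(_ isT) [-> _]; rewrite mul0r.
  have := @H3 a c x y; rewrite hax (negbTE hcy) => /(_ isT) [_ h].
  by rewrite -mulrA h mulr0.
rewrite exchange_big; apply: eq_bigr => y; rewrite inE => /andP[hby hcy].
rewrite -mulr_suml -mulr_sumr /X; congr (_ * _).
rewrite mulr_sumr -(sum_restrict (S:=[set x | e a x]) (F:=fun x => v a b * v x y)) /=.
  by rewrite -mulr_sumr Hcol mulr1.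
move=> x; rewrite inE => hax.
by have := @H3 a b x y; rewrite (negbTE hax) hby => /(_ isT) [-> _].
Qed.

Lemma dp_lt s : forall a b c d, gdist e a c = s -> (s < gdist e b d)%N -> v a b * v c d = 0.
Proof.
elim: s => [|s IH] a b c d hac hbd.
  have hca := gdist0 hac; subst c; apply: orth_row.
  by apply/eqP => hbd'; subst d; rewrite gdist_xx in hbd.
have [x hxc hax] := gdist_pred hac.
rewrite (insert_row x) big1 // => y _.
case: (boolP (e y d)) => hyd.
  rewrite (IH a b x y hax) ?mul0r //.
  have := gdist_edge b hyd => h; rewrite -ltnS; exact: leq_trans hbd h.
have := @H3 x y c d; rewrite hxc (negbTE hyd) => /(_ isT) [h _].
by rewrite -mulrA h mulr0.
Qed.

End Orth.

Lemma dp (C : numClosedFieldType) (A : algType C) (v : 'I_n -> 'I_n -> A) :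
  (forall i, \sum_l v i l = 1) -> (forall i, \sum_l v l i = 1) ->
  (forall i j k l, e i k != e j l -> v i j * v k l = 0 /\ v k l * v i j = 0) ->
  (forall a b c, b != c -> ~~ e b c -> #|[set x | e a x]| != #|[set y | e b y & e c y]|) ->
  forall a b c d, gdist e a c != gdist e b d -> v a b * v c d = 0.
Proof.
move=> Hr Hc H3 Hd a b c d; rewrite neq_ltn => /orP[h|h].
  exact: (dp_lt Hr Hc H3 Hd (erefl _) h).
have H3' : forall i j k l, e i k != e j l ->
    (fun x y => v y x) i j * (fun x y => v y x) k l = 0 /\
    (fun x y => v y x) k l * (fun x y => v y x) i j = 0.
  by move=> i j k l hne; apply: H3; rewrite eq_sym.
exact: (dp_lt (v := fun x y => v y x) Hc Hr H3' Hd (erefl _) h).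
Qed.

Section Main.
Variables (C : numClosedFieldType) (A : algType C) (star : A -> A) (nrm : A -> C).
Variable (u : 'I_n -> 'I_n -> A).
Hypothesis cs : cstar_algebra star nrm.
Hypothesis R1s : forall i j, u i j = star (u i j).
Hypothesis R1i : forall i j, u i j * u i j = u i j.
Hypothesis Hrow : forall i, \sum_l u i l = 1.
Hypothesis Hcol : forall i, \sum_l u l i = 1.
Hypothesis H3 : forall i j k l, e i k != e j l -> u i j * u k l = 0 /\ u k l * u i j = 0.
Hypothesis DP : forall a b c d, gdist e a c != gdist e b d -> u a b * u c d = 0.

Lemma star0 : star 0 = 0.
Proof. by apply: (addrI (star 0)); rewrite -(star_add cs) !addr0. Qed.

Lemma star_sum (I : finType) (P : pred I) (F : I -> A) :
  star (\sum_(x | P x) F x) = \sum_(x | P x) star (F x).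
Proof. exact: (big_morph star (star_add cs) star0). Qed.

Lemma starM x y : star (x * y) = star y * star x.
Proof. exact: (star_mul cs). Qed.

Lemma nrm0 : nrm 0 = 0.
Proof. by have := nrm_scale cs 0 0; rewrite scale0r normr0 mul0r. Qed.

Lemma zero_of_TTs T : T * star T = 0 -> T = 0.
Proof.
move=> h; have := nrm_cstar cs (star T); rewrite (star_invol cs) h nrm0.
move/esym/eqP; rewrite expf_eq0 /= => /eqP /(nrm_eq0 cs) hT.
by rewrite -(star_invol cs T) hT star0.
Qed.

Lemma row_orth a b c : b != c -> u a b * u a c = 0.
Proof.
move=> hbc; apply: DP; rewrite gdist_xx eq_sym; apply/eqP => /gdist0 h.
by move: hbc; rewrite h eqxx.
Qed.

Lemma col_orth a b c : b != c -> u b a * u c a = 0.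
Proof.
move=> hbc; apply: DP; rewrite gdist_xx; apply/eqP => /gdist0 h.
by move: hbc; rewrite h eqxx.
Qed.

Lemma uu a b c : u a b * u a c = if c == b then u a b else 0.
Proof. by case: eqP => [->|/eqP h]; [exact: R1i | apply: row_orth; rewrite eq_sym]. Qed.

Lemma insert_row' x (X Y : A) : X * Y = \sum_y X * u x y * Y.
Proof.
transitivity (X * (\sum_y u x y) * Y); first by rewrite Hrow mulr1.
by rewrite mulr_sumr mulr_suml.
Qed.

Variables (m : nat) (i j k l : 'I_n).
Hypothesis hik : gdist e i k = m.
Hypothesis hjl : gdist e j l = m.
Hypothesis Hcomm : forall i j k l : 'I_n, gdist e i k = m.-1 -> gdist e j l = m.-1 ->
     u i j * u k l = u k l * u i j.
Hypothesis HK : forall q q' a, e l q -> e l q' -> q != q' -> gdist e j q = m.-1 ->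
  gdist e j q' = m.-1 -> e q a -> e q' a -> gdist e j a = m -> a = l.

Definition N := [set q | e l q].
Definition L x := \sum_(q in N) u x q.

Lemma L_Y x : e k x -> L x * u k l = u k l /\ u k l * L x = u k l.
Proof.
move=> hkx; split.
  rewrite /L mulr_suml -(sum_restrict (S:=N) (F:=fun q => u x q * u k l)) /=.
    by rewrite -mulr_suml Hrow mul1r.
  move=> q; rewrite inE => hlq.
  by have := @H3 k l x q; rewrite hkx (negbTE hlq) => /(_ isT) [].
rewrite /L mulr_sumr -(sum_restrict (S:=N) (F:=fun q => u k l * u x q)) /=.
  by rewrite -mulr_sumr Hrow mulr1.
move=> q; rewrite inE => hlq.
by have := @H3 k l x q; rewrite hkx (negbTE hlq) => /(_ isT) [].
Qed.

Lemma comm_ij x q : gdist e i x = m.-1 -> u i j * u x q = u x q * u i j.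
Proof.
move=> hix; case: (eqVneq (gdist e j q) m.-1) => hjq; first exact: Hcomm.
have h0 : u i j * u x q = 0 by apply: DP; rewrite hix eq_sym.
rewrite h0; transitivity (star (u i j * u x q)); first by rewrite h0 star0.
by rewrite starM -!R1s.
Qed.


Lemma comm_L x : gdist e i x = m.-1 -> u i j * L x = L x * u i j.
Proof.
move=> hix; rewrite /L mulr_sumr mulr_suml; apply: eq_bigr => q _; exact: comm_ij.
Qed.

Variables (p p' : 'I_n).
Hypotheses (hkp : e k p) (hkp' : e k p') (hip : gdist e i p = m.-1)
  (hip' : gdist e i p' = m.-1) (hpp : p != p').

Definition Cq q := u i j * u p q.
Definition g q q' := (q' != q) && (gdist e j q' == m.-1).
Definition Dq q := \sum_(q' in N | ~~ g q q') u p' q'.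
Definition Gq q := \sum_(q' in N | g q q') u p' q'.

Lemma bad0 q q' : ~~ g q q' -> Cq q * u p' q' = 0.
Proof.
rewrite negb_and negbK => /orP[/eqP ->|hne].
  by rewrite /Cq -mulrA col_orth ?mulr0.
case: (eqVneq (gdist e j q) m.-1) => hjq.
  rewrite /Cq comm_ij // -mulrA (@DP i j p' q') ?mulr0 //.
  by rewrite hip' eq_sym.
by rewrite /Cq (@DP i j p q) ?mul0r // hip eq_sym.
Qed.

Lemma good q q' : g q q' -> e l q -> e l q' -> Cq q * u p' q' = Cq q * u k l * u p' q'.
Proof.
move=> /andP[hq'q /eqP hjq'] hlq hlq'.
case: (eqVneq (gdist e j q) m.-1) => hjq; last first.
  by rewrite /Cq (@DP i j p q) ?mul0r // hip eq_sym.
rewrite [LHS](insert_row' k) (bigD1 l) //= big1 ?addr0 // => a hal.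
case: (boolP (e q a)) => hqa; last first.
  have := @H3 p q k a; rewrite esy hkp (negbTE hqa) => /(_ isT) [h _].
  by rewrite /Cq -(mulrA (u i j)) h mulr0 mul0r.
case: (boolP (e a q')) => haq; last first.
  have := @H3 k a p' q'; rewrite hkp' (negbTE haq) => /(_ isT) [h _].
  by rewrite -mulrA h mulr0.
case: (eqVneq (gdist e j a) m) => hja; last first.
  rewrite /Cq comm_ij // -(mulrA (u p q)) (@DP i j k a) ?mulr0 ?mul0r //.
  by rewrite hik eq_sym.
have := HK hlq hlq' _ hjq hjq' hqa _ hja.
by rewrite eq_sym hq'q esy haq => /(_ isT isT) /eqP; rewrite (negbTE hal).
Qed.

Lemma Cq_L q : e l q -> Cq q * (u k l - L p') = Cq q * u k l * Dq q.
Proof.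
move=> hlq.
have hL : L p' = Gq q + Dq q by rewrite /L (bigID (g q)).
have hY : u k l * L p' = u k l := (L_Y hkp').2.
have hCD : Cq q * Dq q = 0.
  by rewrite /Dq mulr_sumr big1 // => q' /andP[_ hb]; apply: bad0.
have hCG : Cq q * Gq q = Cq q * u k l * Gq q.
  rewrite /Gq !mulr_sumr; apply: eq_bigr => q' /andP[hq' hg].
  by apply: good => //; move: hq'; rewrite inE.
rewrite -{1}hY hL mulrBr [X in _ - X]mulrDr hCD addr0 hCG mulrA mulrDr.
by rewrite addrAC subrr add0r.
Qed.

Lemma Delta : u i j * u k l - u i j * (L p * L p') = \sum_(q in N) Cq q * u k l * Dq q.
Proof.
have h1 : u i j * u k l = u i j * L p * u k l by rewrite -mulrA (L_Y hkp).1.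
rewrite h1 mulrA -mulrBr /L [X in X * _]mulr_sumr mulr_suml.
apply: eq_bigr => q; rewrite inE => hlq; exact: Cq_L.
Qed.

Lemma Delta_Y : (u i j * u k l - u i j * (L p * L p')) * u k l = 0.
Proof.
by rewrite mulrBl -mulrA R1i -!mulrA (L_Y hkp').1 (L_Y hkp).1 subrr.
Qed.

Lemma CC r q : Cq r * Cq q = if q == r then Cq r else 0.
Proof.
case: (eqVneq (gdist e j r) m.-1) => hjr.
  rewrite /Cq mulrA -(mulrA _ (u p r)) -comm_ij // mulrA R1i -mulrA uu.
  by case: eqP => _; rewrite ?mulr0.
have h0 : Cq r = 0 by rewrite /Cq (@DP i j p r) // hip eq_sym.
by rewrite h0 mul0r; case: ifP.
Qed.

Definition T r := Cq r * u k l * Dq r.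

Lemma T_Y r : e l r -> T r * u k l = 0.
Proof.
move=> hlr.
have : Cq r * ((u i j * u k l - u i j * (L p * L p')) * u k l) = 0.
  by rewrite Delta_Y mulr0.
rewrite mulrA Delta mulr_sumr (bigD1 r) ?inE //= big1 ?addr0.
  by rewrite (mulrA (Cq r)) (mulrA (Cq r)) CC eqxx.
move=> q /andP[_ hqr]; by rewrite (mulrA (Cq r)) (mulrA (Cq r)) CC (negbTE hqr) !mul0r.
Qed.

Lemma D_star r : star (Dq r) = Dq r.
Proof. by rewrite /Dq star_sum; apply: eq_bigr => q _; rewrite -R1s. Qed.

Lemma D_idem r : Dq r * Dq r = Dq r.
Proof.
rewrite {1}/Dq mulr_suml; apply: eq_bigr => q' hq'.
rewrite /Dq mulr_sumr (bigD1 q') //= big1 ?addr0 ?R1i //.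
by move=> q'' /andP[_ hne]; rewrite row_orth // eq_sym.
Qed.

Lemma assoc_aux (X Y Dd Z : A) : Dd * Dd = Dd ->
  (X * Y * Dd) * (Dd * Y * Z) = (X * Y * Dd * Y) * Z.
Proof. by move=> h; rewrite -!mulrA (mulrA Dd) h. Qed.

Lemma T0 r : e l r -> T r = 0.
Proof.
move=> hlr; apply: zero_of_TTs.
rewrite {2}/T (starM (Cq r * u k l) (Dq r)) (starM (Cq r) (u k l)) D_star -R1s.
rewrite [Dq r * _]mulrA [T r]/T assoc_aux ?D_idem //.
by rewrite -[Cq r * u k l * Dq r]/(T r) T_Y // mul0r.
Qed.

Lemma G_main : u i j * u k l = u i j * (L p * L p').
Proof.
apply/eqP; rewrite -subr_eq0 Delta big1 // => q; rewrite inE => hlq; exact: T0.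
Qed.

End Main.
End Graph.

Unset Implicit Arguments.
Theorem lemma3p8 (n : nat) (e : rel 'I_n) (D : nat) (b c : nat -> nat)
  (C : numClosedFieldType) (A : algType C) (star : A -> A) (nrm : A -> C)
  (u : 'I_n -> 'I_n -> A) (m : nat) :
  distance_regular e D b c ->
  cstar_algebra star nrm ->
  qaut_relations e star u ->
  (2 <= m <= D)%N -> (2 <= c m)%N ->
  (forall i j k l : 'I_n, gdist e i k = m.-1 -> gdist e j l = m.-1 ->
     (u i j * u k l = u k l * u i j)%R) ->
  [\/ c 2 = 1%N /\ (b 1 + 1 = b 0)%N,
      c 2 = 1%N /\ (b 1 + 2 = b 0)%N |
      [/\ c 2 = 2%N, m = 2%N & (b 1 + 3 = b 0)%N]] ->
  forall i j k l : 'I_n, gdist e i k = m -> gdist e j l = m ->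
    (u i j * u k l = u k l * u i j)%R.
Proof.
move=> [[esy eirr] econn [hDle hDex] Hdr] cs [R1 R2 R3] /andP[hm2 hmD] hcm Hcomm Hc
  i j k l hik hjl.
have HD : (2 <= D)%N := leq_trans hm2 hmD.
have R1s : forall i j, u i j = star (u i j) := fun i j => (R1 i j).1.
have R1i : forall i j, (u i j * u i j = u i j)%R := fun i j => esym (R1 i j).2.
have Hrow : forall i, (\sum_l u i l = 1)%R := fun i => (R2 i).1.
have Hcol : forall i, (\sum_l u l i = 1)%R := fun i => (R2 i).2.
have hP : #|[set z | e k z & gdist e i z == (gdist e i k).-1]| = c m.
  by have := (Hdr i k).2; rewrite hik => /(_ (ltnW hm2)).
have hcmb : (c m <= b 0)%N.
  rewrite -hP -(deg eirr econn Hdr HD k).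
  by apply: subset_leq_card; apply/subsetP => z; rewrite !inE => /andP[-> _].
have hb0 : (0 < b 0)%N by lia.
have hb0c2 : b 0 != c 2 by case: Hc => [[? ?]|[? ?]|[? ? ?]]; apply/eqP; lia.
have hdeg := Hdeg_lemma esy eirr econn Hdr HD hb0 hb0c2.
have DP := dp eirr econn Hrow Hcol R3 hdeg.
have HK := HK_lemma esy eirr econn Hdr HD Hc hjl.
have : (1 < #|[set z | e k z & gdist e i z == (gdist e i k).-1]|)%N by rewrite hP.
case/card_gt1P => p [p' [hp hp' hpp]].
move: hp hp'; rewrite !inE hik => /andP[hkp /eqP hip] /andP[hkp' /eqP hip'].
have G1 := G_main esy econn cs R1s R1i Hrow R3 DP hik Hcomm HK hkp hkp' hip hip' hpp.
have hpp' : p' != p by rewrite eq_sym.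
have G2 := G_main esy econn cs R1s R1i Hrow R3 DP hik Hcomm HK hkp' hkp hip' hip hpp'.
have starL : forall x, star (L e u l x) = L e u l x.
  by move=> x; rewrite /L (star_sum cs); apply: eq_bigr => q _; rewrite -R1s.
have h : (u k l * u i j = star (u i j * u k l))%R by rewrite (star_mul cs) -!R1s.
rewrite h [X in star X]G2 !(star_mul cs) !starL -R1s -mulrA.
rewrite -(comm_L cs R1s DP j l Hcomm hip') mulrA.
by rewrite -(comm_L cs R1s DP j l Hcomm hip) -mulrA -G1.
Qed.
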